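(* Let $\sigma$ be a signature. For any set $\Delta\cup\{\alpha\}$ of $\mathcal{CO}[\sigma]$-formulas, $\Delta\models^g\alpha$ if and only if $\Delta\models^c\alpha$.
   Context: A signature $\sigma=(\mathrm{Dom},\mathrm{Ran})$: $\mathrm{Dom}$ nonempty finite set of variables, each with nonempty finite range $\mathrm{Ran}(X)$; $\mathbf X=\mathbf x$ abbreviates $X_1=x_1\wedge\dots\wedge X_n=x_n$ ($\mathbf x\in\prod\mathrm{Ran}(X_i)$), inconsistent if it contains $X=x,X=x'$ with $x\ne x'$. $\mathcal{CO}[\sigma]$: $\alpha::=X=x\mid\neg\alpha\mid\alpha\wedge\alpha\mid\alpha\vee\alpha\mid\mathbf X=\mathbf x\;\Box\!\!\rightarrow\alpha$. Systems of functions $\mathcal F$: for each $V\in\mathrm{En}(\mathcal F)\subseteq\mathrm{Dom}$ parents $PA^{\mathcal F}_V\subseteq\mathrm{Dom}\setminus\{V\}$ and $\mathcal F_V:\mathrm{Ran}(PA^{\mathcal F}_V)\to\mathrm{Ran}(V)$; $\mathrm{Ex}(\mathcal F)=\mathrm{Dom}\setminus\mathrm{En}(\mathcal F)$; only recursive (acyclic parent graph). An assignment $s$ is compatible with $\mathcal F$ if $s(V)=\mathcal F_V(s(PA^{\mathcal F}_V))$ for $V\in\mathrm{En}(\mathcal F)$. For consistent $\mathbf X=\mathbf x$: $\mathcal F_{\mathbf X=\mathbf x}$ restricts $\mathcal F$ to $\mathrm{En}(\mathcal F)\setminus\mathbf X$; $s^{\mathcal F}_{\mathbf X=\mathbf x}$: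 $X_i\mapsto x_i$, $V\mapsto s(V)$ on $\mathrm{Ex}(\mathcal F)\setminus\mathbf X$, $V\mapsto\mathcal F_V(s^{\mathcal F}_{\mathbf X=\mathbf x}(PA^{\mathcal F}_V))$ on $\mathrm{En}(\mathcal F)\setminus\mathbf X$. Causal team $T=(T^-,\mathcal F)$ ($T^-$ a set of compatible assignments; empty team components identified as $\emptyset$); causal subteams $(S^-,\mathcal F)$, $S^-\subseteq T^-$; $T_{\mathbf X=\mathbf x}=(\{s^{\mathcal F}_{\mathbf X=\mathbf x}:s\in T^-\},\mathcal F_{\mathbf X=\mathbf x})$. $\models^c$: $T\models X=x$ iff $s(X)=x$ for all $s\in T^-$; $T\models\neg\alpha$ iff $(\{s\},\mathcal F)\not\models\alpha$ for all $s\in T^-$; $\wedge$ classical; $T\models\alpha\vee\beta$ iff causal subteams $T_1,T_2$ exist with $T_1^-\cup T_2^-=T^-$, $T_1\models\alpha$, $T_2\models\beta$; $T\models\mathbf X=\mathbf x\;\Box\!\!\rightarrow\alpha$ iff $\mathbf X=\mathbf x$ inconsistent or $T_{\mathbf X=\mathbf x}\models\alpha$. Generalized causal team: a set $T$ of compatible pairs $(s,\mathcal F)$ with $\mathcal F$ recursive; $T^-=\{s:(s,\mathcal F)\in T\}$; $T_{\mathbf X=\mathbf x}=\{(s^{\mathcal F}_{\mathbf X=\mathbf x},\mathcal F_{\mathbf X=\mathbf x}):(s,\mathcal F)\in T\}$; $\models^g$: same clauses except $T\models\neg\alpha$ iff $\{(s,\mathcal F)\}\not\models\alpha$ for all $(s,\mathcal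 F)\in T$, and $T\models\alpha\vee\beta$ iff $T=T_1\cup T_2$ with $T_1\models\alpha$, $T_2\models\beta$. $\Delta\models^c\alpha$: every causal team over $\sigma$ satisfying all of $\Delta$ satisfies $\alpha$; $\Delta\models^g\alpha$ likewise for generalized causal teams over $\sigma$. *)

(* Defs.v *)
From mathcomp Require Import all_boot.
From Stdlib Require List.

Set Implicit Arguments.
Unset Strict Implicit.
Unset Printing Implicit Defensive.

Record signature := Signature {
  Dom : finType;
  Ran : Dom -> finType
}.

Definition signature_ok (sg : signature) : Prop :=
  0 < #|Dom sg| /\ forall X : Dom sg, 0 < #|Ran X|.

Definition assign (sg : signature) := forall X : Dom sg, Ran X.

Definition eqn (sg : signature) := {X : Dom sg & Ran X}.

(* Formulas of CO[sigma].  A conjunction X1=x1 /\ ... /\ Xn=xn is the list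
   of its equations. *)
Inductive form (sg : signature) : Type :=
| FEq  : forall X : Dom sg, Ran X -> form sg
| FNeg : form sg -> form sg
| FAnd : form sg -> form sg -> form sg
| FOr  : form sg -> form sg -> form sg
| FCf  : seq (eqn sg) -> form sg -> form sg.

Definition consistent (sg : signature) (l : seq (eqn sg)) : Prop :=
  forall p q, List.In p l -> List.In q l -> projT1 p = projT1 q -> p = q.

Definition invars (sg : signature) (l : seq (eqn sg)) (V : Dom sg) : bool :=
  has (fun p => projT1 p == V) l.

Fixpoint ivval (sg : signature) (l : seq (eqn sg)) (V : Dom sg)
  : option (Ran V) :=
  match l with
  | [::] => None
  | p :: l' =>
    match projT1 p =P V with
    | ReflectT e => Some (eq_rect _ (fun X => Ran X : Type) (projT2 p) _ e)
    | ReflectF _ => ivval l' V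
    end
  end.

(* A system of functions: parents PA_V and, for endogenous V, a function
   F_V.  F_V is represented as a function on full assignments which depends
   only on the PA_V-coordinates (equivalently a function Ran(PA_V) -> Ran V).
   fn V = None means V is exogenous. *)
Record system (sg : signature) := System {
  pa : Dom sg -> {set Dom sg};
  fn : forall V : Dom sg, option (assign sg -> Ran V)
}.

Definition endo (sg : signature) (F : system sg) (V : Dom sg) : bool :=
  if fn F V is Some _ then true else false.

Definition parent_rel (sg : signature) (F : system sg) : rel (Dom sg) :=
  fun X V => endo F V && (X \in pa F V).

Definition wf_system (sg : signature) (F : system sg) : Prop :=
  (forall V, ~~ endo F V -> pa F V = set0) /\
  (forall V, V \notin pa F V) /\
  (forall V f, fn F V = Some f ->
     forall s t : assign sg, (forall X, X \in pa F V -> s X = t X) ->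
       f s = f t) /\
  (forall X V, parent_rel F X V -> ~~ connect (parent_rel F) V X).

Definition compatible (sg : signature) (F : system sg) (s : assign sg) : Prop :=
  forall V f, fn F V = Some f -> s V = f s.

Definition sys_do (sg : signature) (F : system sg) (l : seq (eqn sg))
  : system sg :=
  System (fun V => if invars l V then set0 else pa F V)
         (fun V => if invars l V then None else fn F V).

Definition do_step (sg : signature) (F : system sg) (l : seq (eqn sg))
  (s t : assign sg) : assign sg :=
  fun V => match ivval l V with
           | Some x => x
           | None => match fn F V with
                     | Some f => f t
                     | None => s V
                     end
           end.

(* s^F_{X=x}: for acyclic F, iterating #|Dom| times computes the recursive
   definition (each variable is fixed after (depth in the graph + 1) steps). *)
Definition do_assign (sg : signature) (F : system sg) (l : seq (eqn sg))
  (s : assign sg) : assign sg :=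
  iter #|Dom sg| (do_step F l s) s.

Fixpoint sat_c (sg : signature) (F : system sg) (T : assign sg -> Prop)
  (a : form sg) {struct a} : Prop :=
  match a with
  | FEq X x => forall s, T s -> s X = x
  | FNeg b => forall s, T s -> ~ sat_c F (fun t => t = s) b
  | FAnd b c => sat_c F T b /\ sat_c F T c
  | FOr b c => exists T1 T2 : assign sg -> Prop,
      (forall s, T1 s -> T s) /\ (forall s, T2 s -> T s) /\
      (forall s, T s -> T1 s \/ T2 s) /\
      sat_c F T1 b /\ sat_c F T2 c
  | FCf l b => consistent l ->
      sat_c (sys_do F l) (fun t => exists s, T s /\ t = do_assign F l s) b
  end.

Fixpoint sat_g (sg : signature) (T : assign sg -> system sg -> Prop)
  (a : form sg) {struct a} : Prop :=
  match a with
  | FEq X x => forall s F, T s F -> s X = x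
  | FNeg b => forall s F, T s F -> ~ sat_g (fun t G => t = s /\ G = F) b
  | FAnd b c => sat_g T b /\ sat_g T c
  | FOr b c => exists T1 T2 : assign sg -> system sg -> Prop,
      (forall s F, T1 s F -> T s F) /\ (forall s F, T2 s F -> T s F) /\
      (forall s F, T s F -> T1 s F \/ T2 s F) /\
      sat_g T1 b /\ sat_g T2 c
  | FCf l b => consistent l ->
      sat_g (fun t G => exists s F, T s F /\ t = do_assign F l s /\
                                    G = sys_do F l) b
  end.

Definition causal_team (sg : signature) (F : system sg) (T : assign sg -> Prop)
  : Prop := wf_system F /\ forall s, T s -> compatible F s.

Definition gen_team (sg : signature) (T : assign sg -> system sg -> Prop)
  : Prop := forall s F, T s F -> wf_system F /\ compatible F s.

Definition ent_c (sg : signature) (Delta : form sg -> Prop) (a : form sg)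
  : Prop :=
  forall F T, causal_team F T ->
    (forall d, Delta d -> sat_c F T d) -> sat_c F T a.

Definition ent_g (sg : signature) (Delta : form sg -> Prop) (a : form sg)
  : Prop :=
  forall T, gen_team T -> (forall d, Delta d -> sat_g T d) -> sat_g T a.

(* Main.v *)
Require Import Defs.
From mathcomp Require Import all_boot.

Notation sing s F := (fun t G => t = s /\ G = F).

Lemma sat_g_ext (sg : signature) (a : form sg) :
  forall T T' : assign sg -> system sg -> Prop,
  (forall s F, T s F <-> T' s F) -> sat_g T a -> sat_g T' a.
Proof.
induction a as [X x | b IHb | b IHb c IHc | b IHb c IHc | l b IHb];
  intros T T' E; simpl.
- intros H s F h. apply (H s F). apply E; exact h.
- intros H s F h. apply H. apply E; exact h.
- intros [H1 H2]; split; [apply (IHb T T') | apply (IHc T T')]; assumption.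
- intros [T1 [T2 [H1 [H2 [H3 [Hb Hc]]]]]]. exists T1, T2.
  split; [intros s F h; apply E; auto|].
  split; [intros s F h; apply E; auto|].
  split; [intros s F h; apply H3; apply E; exact h|].
  split; assumption.
- intros H Hl. refine (IHb _ _ _ (H Hl)).
  intros t G; split.
  + intros [s [F [h [-> ->]]]]. exists s, F. split; [apply E; exact h|auto].
  + intros [s [F [h [-> ->]]]]. exists s, F. split; [apply E; exact h|auto].
Qed.

Lemma flat (sg : signature) (a : form sg) :
  forall T : assign sg -> system sg -> Prop,
  sat_g T a <-> (forall s F, T s F -> sat_g (sing s F) a).
Proof.
induction a as [X x | b IHb | b IHb c IHc | b IHb c IHc | l b IHb];
  intros T; simpl.
- split.
  + intros H s F HT t G [-> ->]; eauto.
  + intros H s F HT; exact (H s F HT s F (conj (erefl _) (erefl _))).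
- split.
  + intros H s F HT t G [-> ->]; apply H; auto.
  + intros H s F HT; exact (H s F HT s F (conj (erefl _) (erefl _))).
- split.
  + intros [H1 H2] s F HT; split;
      [apply (proj1 (IHb T)) | apply (proj1 (IHc T))]; auto.
  + intros H; split; [apply IHb | apply IHc]; intros s F HT; apply (H s F HT).
- split.
  + intros [T1 [T2 [H1 [H2 [H3 [Hb Hc]]]]]] s F HT.
    destruct (H3 s F HT) as [h|h].
    * exists (sing s F), (fun _ _ => False).
      split; [auto|]. split; [tauto|]. split; [left; auto|]. split.
      -- apply (proj1 (IHb T1) Hb s F h).
      -- apply (proj2 (IHc _)); intros; contradiction.
    * exists (fun _ _ => False), (sing s F).
      split; [tauto|]. split; [auto|]. split; [right; auto|]. split.
      -- apply (proj2 (IHb _)); intros; contradiction.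
      -- apply (proj1 (IHc T2) Hc s F h).
  + intros H.
    exists (fun s F => T s F /\ sat_g (sing s F) b),
           (fun s F => T s F /\ sat_g (sing s F) c).
    split; [tauto|]. split; [tauto|]. split.
    * intros s F HT.
      destruct (H s F HT) as [U1 [U2 [G1 [G2 [G3 [Sb Sc]]]]]].
      destruct (G3 s F (conj (erefl _) (erefl _))) as [u|u].
      -- left; split; auto. apply (@sat_g_ext _ b U1); auto.
         intros t G; split; [apply G1 | intros [-> ->]; exact u].
      -- right; split; auto. apply (@sat_g_ext _ c U2); auto.
         intros t G; split; [apply G2 | intros [-> ->]; exact u].
    * split; [apply IHb | apply IHc]; intros s F [_ h]; exact h.
- split.
  + intros H s F HT Hl. apply (proj2 (IHb _)).
    intros t G [s' [F' [[-> ->] [-> ->]]]].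
    apply (proj1 (IHb _) (H Hl)). exists s, F; auto.
  + intros H Hl. apply (proj2 (IHb _)).
    intros t G [s [F [HT [-> ->]]]].
    apply (proj1 (IHb _) (H s F HT Hl)). exists s, F. auto.
Qed.

Lemma emb (sg : signature) (a : form sg) :
  forall (F : system sg) (T : assign sg -> Prop),
  sat_c F T a <-> sat_g (fun s G => T s /\ G = F) a.
Proof.
induction a as [X x | b IHb | b IHb c IHc | b IHb c IHc | l b IHb];
  intros F T; simpl.
- split.
  + intros H s G [HT ->]; auto.
  + intros H s HT; exact (H s F (conj HT (erefl _))).
- split.
  + intros H s G [HT ->] Hs. apply (H s HT). apply IHb; exact Hs.
  + intros H s HT Hs; apply (H s F (conj HT (erefl _))); apply IHb; exact Hs.
- split.
  + intros [H1 H2]; split; [apply IHb | apply IHc]; auto.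
  + intros [H1 H2]; split; [apply IHb | apply IHc]; auto.
- split.
  + intros [T1 [T2 [H1 [H2 [H3 [Hb Hc]]]]]].
    exists (fun s G => T1 s /\ G = F), (fun s G => T2 s /\ G = F).
    split; [intros s G [h ->]; auto|].
    split; [intros s G [h ->]; auto|].
    split; [intros s G [h ->]; destruct (H3 s h); [left|right]; auto|].
    split; [apply IHb | apply IHc]; auto.
  + intros [U1 [U2 [G1 [G2 [G3 [Sb Sc]]]]]].
    exists (fun s => U1 s F), (fun s => U2 s F).
    split; [intros s h; exact (proj1 (G1 s F h))|].
    split; [intros s h; exact (proj1 (G2 s F h))|].
    split; [intros s h; apply (G3 s F (conj h (erefl _)))|].
    split.
    * apply IHb. apply (@sat_g_ext _ b U1); auto.
      intros s G; split.
      -- intros h; destruct (G1 _ _ h) as [_ ->]; auto.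
      -- intros [h ->]; auto.
    * apply IHc. apply (@sat_g_ext _ c U2); auto.
      intros s G; split.
      -- intros h; destruct (G2 _ _ h) as [_ ->]; auto.
      -- intros [h ->]; auto.
- split.
  + intros H Hl. specialize (H Hl). apply IHb in H.
    refine (@sat_g_ext _ b _ _ _ H).
    intros t G; split.
    * intros [[s [HT ->]] ->]. exists s, F; auto.
    * intros [s [F' [[HT ->] [-> ->]]]]. split; eauto.
  + intros H Hl. specialize (H Hl). apply IHb.
    refine (@sat_g_ext _ b _ _ _ H).
    intros t G; split.
    * intros [s [F' [[HT ->] [-> ->]]]]. split; eauto.
    * intros [[s [HT ->]] ->]. exists s, F; auto.
Qed.

Theorem corollary2p17 (sg : signature) (Hsg : signature_ok sg)
  (Delta : form sg -> Prop) (alpha : form sg) :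
  ent_g Delta alpha <-> ent_c Delta alpha.
Proof.
split.
- intros Hg F T [Hwf Hcomp] HD. apply emb. apply Hg.
  + intros s G [HT ->]; split; auto.
  + intros d Hd; apply emb; auto.
- intros Hc T HT HD. apply flat. intros s F HsF.
  destruct (HT s F HsF) as [Hwf Hcomp].
  assert (h : sat_c F (fun t => t = s) alpha).
  { apply Hc.
    - split; [auto | intros t ->; auto].
    - intros d Hd. apply emb.
      exact (proj1 (@flat _ d T) (HD d Hd) s F HsF). }
  apply emb in h; exact h.
Qed.
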